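(* Let $n\ge3$. A set $A$ of vertices of $C_n$ is maximally even if and only if $A$ is a maximizer of the function $F(A)=\prod_{\{u,v\}\subseteq A,\,u\neq v} d(u,v)$ (product over unordered pairs of distinct vertices of $A$), i.e. $F(A)=\max\{F(B): B\subseteq V(C_n),\ |B|=|A|\}$.
   Context: The cycle $C_n$ has vertex set $\{0,\dots,n-1\}$ with $i$ adjacent to $i+1\bmod n$; $d(u,v)$ is geodesic distance and $d^*(u,v)$ is the least non-negative integer congruent to $v-u$ mod $n$. For $A=\{a_0<\dots<a_{m-1}\}$, $\mathrm{span}_A(a_i,a_j)$ is the least positive integer congruent to $j-i$ mod $m$, and $\sigma^*_k(A)=[\,d^*(u,v): u,v\in A,u\ne v,\mathrm{span}_A(u,v)=k\,]$ (multiset). $A$ is maximally even if for each $1\le k\le m-1$ the set of values of $\sigma^*_k(A)$ is a single integer or two consecutive integers. *)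

(* Defs.v *)
From mathcomp Require Import all_boot all_order.
Set Implicit Arguments. Unset Strict Implicit. Unset Printing Implicit Defensive.

Section Cycle.
Variable n : nat.

Definition dstar (u v : 'I_n) : nat := (v + n - u) %% n.

Definition cdist (u v : 'I_n) : nat := minn (dstar u v) (dstar v u).

Definition sorted_elems (A : {set 'I_n}) : seq 'I_n :=
  sort (fun x y : 'I_n => (x <= y)%N) (enum A).

Definition idx (A : {set 'I_n}) (u : 'I_n) : nat := index u (sorted_elems A).

Definition span (A : {set 'I_n}) (u v : 'I_n) : nat :=
  let m := #|A| in
  let r := (idx A v + m - idx A u) %% m in
  if r == 0 then m else r.

(* the set of values of the multiset sigma*_k(A) *)
Definition sigma_vals (A : {set 'I_n}) (k : nat) : pred nat :=
  fun x => [exists u in A, exists v in A,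
             [&& u != v, span A u v == k & dstar u v == x]].

Definition maximally_even (A : {set 'I_n}) : Prop :=
  forall k, (1 <= k <= #|A| - 1)%N ->
    (exists c, (forall x, sigma_vals A k x -> x = c))
    \/ (exists c, (exists u, sigma_vals A k u /\ u = c) /\
                  (exists w, sigma_vals A k w /\ w = c.+1) /\
                  (forall x, sigma_vals A k x -> x = c \/ x = c.+1)).

Definition Fprod (A : {set 'I_n}) : nat :=
  \prod_(u in A) \prod_(v in A | (u < v)%N) cdist u v.

End Cycle.

(* Main.v *)
From mathcomp Require Import all_boot all_order zify.
Require Import Defs.
Set Implicit Arguments. Unset Strict Implicit. Unset Printing Implicit Defensive.

Definition hh n x := minn x (n - x).
Definition bal m (x : nat -> nat) := [forall i : 'I_m, forall j : 'I_m, x i <= (x j).+1].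

Lemma bal_formula n m (x : nat -> nat) : 0 < m -> bal m x ->
  \prod_(i<m) hh n (x i) =
  hh n ((\sum_(i<m) x i) %/ m) ^ (m - (\sum_(i<m) x i) %% m) *
  hh n ((\sum_(i<m) x i) %/ m).+1 ^ ((\sum_(i<m) x i) %% m).
Proof.
move=> m0 /forallP Hb.
pose i0 := Ordinal m0.
case: (@arg_minnP _ i0 xpredT (fun i : 'I_m => x i) isT) => j _ Hj.
set c := x j.
have Hx : forall i : 'I_m, x i = c \/ x i = c.+1.
  move=> i; have := Hj i isT; have := forallP (Hb i) j; rewrite -/c; lia.
set t := #|[pred i : 'I_m | x i != c]|.
set t' := #|[pred i : 'I_m | x i == c]|.
have Htt : t' + t = m.
  rewrite -[m in RHS]card_ord -(cardC [pred i : 'I_m | x i == c]).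
  congr (_ + _); apply: eq_card => i; by rewrite !inE.
have Ht' : 0 < t'. apply/card_gt0P; exists j; by rewrite inE.
have HS : \sum_(i<m) x i = c * m + t.
  have Ht : \sum_(i<m) (if x i != c then 1 else 0) = t.
    rewrite /t -sum1_card [RHS]big_mkcond /=; apply: eq_bigr => i _; by rewrite inE.
  rewrite -Ht.
  rewrite (eq_bigr (fun i : 'I_m => c + (if x i != c then 1 else 0))); last first.
    move=> i _; case: (Hx i) => ->; rewrite ?eqxx ?addn0 //.
    have -> : (c.+1 != c) by rewrite neq_ltn ltnSn orbT. by rewrite addn1.
  by rewrite big_split /= sum_nat_const card_ord mulnC.
have Hd : (c * m + t) %/ m = c by rewrite divnMDl // divn_small ?addn0 //; lia.
have Hm : (c * m + t) %% m = t by rewrite modnMDl modn_small //; lia.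
rewrite HS Hd Hm (bigID (fun i : 'I_m => x i == c)) /=.
rewrite [X in X * _](eq_bigr (fun _ => hh n c)); last by move=> i /eqP ->.
rewrite [X in _ * X](eq_bigr (fun _ => hh n c.+1)); last first.
  move=> i Hi; case: (Hx i) Hi => ->; [by rewrite eqxx | by []].
rewrite !prod_nat_const; congr (_ ^ _ * _ ^ _).
  have -> : m - t = t' by lia.
  by apply: eq_card => i; rewrite inE.
Qed.

Lemma key n a b : 1 <= a -> a + 2 <= b -> b <= n - 1 ->
  hh n a * hh n b < hh n (a+1) * hh n (b-1).
Proof.
move=> *; rewrite /hh /minn; repeat case: ifP => ?; nia.
Qed.

Lemma big2 R (idx : R) (op : Monoid.com_law idx) m (i j : 'I_m) (F : 'I_m -> R) :
  i != j -> \big[op/idx]_(l < m) F l =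
  op (F i) (op (F j) (\big[op/idx]_(l < m | (l != i) && (l != j)) F l)).
Proof.
move=> ij; rewrite (bigD1 i) //= (bigD1 j) /=; last by rewrite eq_sym.
congr (op _ (op _ _)); apply: eq_bigl => l; by [].
Qed.

Lemma sum2 m (i j : 'I_m) (F : 'I_m -> nat) : i != j -> \sum_(l < m) F l =
  F i + (F j + \sum_(l < m | (l != i) && (l != j)) F l).
Proof. exact: big2. Qed.
Lemma prod2 m (i j : 'I_m) (F : 'I_m -> nat) : i != j -> \prod_(l < m) F l =
  F i * (F j * \prod_(l < m | (l != i) && (l != j)) F l).
Proof. exact: big2. Qed.

Definition Phi n m S := hh n (S %/ m) ^ (m - S %% m) * hh n (S %/ m).+1 ^ (S %% m).

Lemma cmp_aux n m S : 0 < m -> forall N (y : nat -> nat),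
  \sum_(i<m) y i * y i < N ->
  (forall i, i < m -> 0 < y i < n) -> \sum_(i<m) y i = S ->
  \prod_(i<m) hh n (y i) <= Phi n m S /\
  (~~ bal m y -> \prod_(i<m) hh n (y i) < Phi n m S).
Proof.
move=> m0; elim=> [|N IH] y // HN Hy HS.
case: (boolP (bal m y)) => Hb.
  by rewrite (bal_formula n m0 Hb) HS; split.
suff Hlt : \prod_(i<m) hh n (y i) < Phi n m S by split => //; apply: ltnW.
have [i [j Hij]] : exists i j : 'I_m, (y j).+2 <= y i.
  move/forallPn: Hb => [i /forallPn [j Hj]]; exists i, j; rewrite ltnNge; exact: Hj.
have ij : i != j by apply/eqP => E; move: Hij; rewrite E; lia.
pose y' := fun l : nat => if l == i then y i - 1 else if l == j then y j + 1 else y l.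
have Ey : forall l : 'I_m, l != i -> l != j -> y' l = y l.
  move=> l li lj; rewrite /y' (negbTE (li : (l:nat) != i)) (negbTE (lj : (l:nat) != j)) //.
have y'i : y' i = y i - 1 by rewrite /y' eqxx.
have y'j : y' j = y j + 1 by rewrite /y' eq_sym (negbTE (ij : (i:nat) != j)) eqxx.
have Hyi := Hy i (ltn_ord i); have Hyj := Hy j (ltn_ord j).
have Hy' : forall l, l < m -> 0 < y' l < n.
  move=> l lm; rewrite /y'; case: ifP => _; first lia.
  case: ifP => _; first lia. exact: Hy.
have Hsum : \sum_(l<m) y' l = S.
  rewrite -HS (sum2 (fun l : 'I_m => y' l) ij) (sum2 (fun l : 'I_m => y l) ij).
  rewrite (eq_bigr (fun l : 'I_m => y l)); last by move=> l /andP [] ? ?; rewrite Ey.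
  rewrite y'i y'j. set R := \sum_(i0 < m | _) _; lia.
have Hpot : \sum_(l<m) y' l * y' l < N.
  move: HN; rewrite (sum2 (fun l : 'I_m => y l * y l) ij) (sum2 (fun l : 'I_m => y' l * y' l) ij).
  rewrite [X in _ -> _ + (_ + X) < _](eq_bigr (fun l : 'I_m => y l * y l)); last by move=> l /andP [] ? ?; rewrite Ey.
  rewrite y'i y'j; set R := \sum_(i0 < m | _) _.
  have E : y i = (y i - 1).+1 by lia.
  move: Hij; rewrite E; set a := y i - 1; set b := y j; nia.
have [IH1 _] := IH y' Hpot Hy' Hsum.
apply: leq_trans IH1.
rewrite (prod2 (fun l : 'I_m => hh n (y' l)) ij) (prod2 (fun l : 'I_m => hh n (y l)) ij).
rewrite [X in _ < _ * (_ * X)](eq_bigr (fun l : 'I_m => hh n (y l))); last by move=> l /andP [] ? ?; rewrite Ey.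
have Hk := @key n (y j) (y i) ltac:(lia) ltac:(lia) ltac:(lia).
have Hpos : 0 < \prod_(l < m | (l != i) && (l != j)) hh n (y l).
  rewrite prodn_gt0 // => l; rewrite /hh; have := Hy l (ltn_ord l); lia.
rewrite y'i y'j. set R := \prod_(i0 < m | _) _. move: Hpos Hk; rewrite -/R.
set p1 := hh n (y i); set p2 := hh n (y j); set p3 := hh n (y j + 1); set p4 := hh n (y i - 1); nia.
Qed.

Lemma cmp n m (x y : nat -> nat) : 0 < m ->
  (forall i, i < m -> 0 < y i < n) ->
  bal m x -> \sum_(i<m) x i = \sum_(i<m) y i ->
  \prod_(i<m) hh n (y i) <= \prod_(i<m) hh n (x i) /\
  (~~ bal m y -> \prod_(i<m) hh n (y i) < \prod_(i<m) hh n (x i)).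
Proof.
move=> m0 Hy Hx HS; rewrite (bal_formula n m0 Hx) HS.
exact: (@cmp_aux n m _ m0 (\sum_(i<m) y i * y i).+1 y (ltnSn _) Hy erefl).
Qed.

Lemma modl m i j k : i < m -> j < m -> 0 < k < m -> ((j + m - i) %% m == k) = (j == (i+k)%%m).
Proof. move=> *. case: (leqP i j) => ?; case: (leqP m (i+k))=>?.
- have ->: j + m - i = (j - i) + m by lia. rewrite modnDr.
  have ->: (i+k) = (i + k - m) + m by lia. rewrite modnDr !modn_small; lia.
- have ->: j + m - i = (j - i) + m by lia. rewrite modnDr !modn_small; lia.
- have ->: (i+k) = (i + k - m) + m by lia. rewrite modnDr !modn_small; lia.
- rewrite !modn_small; lia.
Qed.

Section Comb.
Variable n : nat.
Variable x0 : 'I_n.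

Lemma dstarE (u v : 'I_n) : dstar u v = if u <= v then v - u else v + n - u.
Proof.
have := ltn_ord u; have := ltn_ord v => hv hu.
rewrite /dstar; case: ifP => uv.
  have -> : v + n - u = (v - u) + n by lia.
  rewrite modnDr modn_small //; lia.
rewrite modn_small //; lia.
Qed.

Lemma cdistE (u v : 'I_n) : cdist u v = hh n (dstar u v).
Proof.
have := ltn_ord u; have := ltn_ord v => hv hu.
rewrite /cdist /hh !dstarE; case: ifP => ?; case: ifP => ?; rewrite /minn;
  repeat case: ifP => ?; lia.
Qed.

Lemma cdistC (u v : 'I_n) : cdist u v = cdist v u.
Proof. by rewrite /cdist minnC. Qed.

Section OnSet.
Variable B : {set 'I_n}.
Local Notation s := (sorted_elems B).
Local Notation m := #|B|.
Definition a i := nth x0 s i.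

Lemma size_s : size s = m.
Proof. by rewrite /sorted_elems size_sort cardE. Qed.
Lemma uniq_s : uniq s.
Proof. by rewrite /sorted_elems sort_uniq enum_uniq. Qed.
Lemma mem_s u : (u \in s) = (u \in B).
Proof. by rewrite /sorted_elems mem_sort mem_enum. Qed.
Lemma sorted_s : sorted (fun x y : 'I_n => (x <= y)%N) s.
Proof. apply: sort_sorted => x y; exact: leq_total. Qed.

Lemma a_le i j : i <= j -> j < m -> a i <= a j.
Proof.
move=> ij jm; rewrite /a.
have tr : transitive (fun x y : 'I_n => (x <= y)%N) by move=> x y z; exact: leq_trans.
have rf : reflexive (fun x y : 'I_n => (x <= y)%N) by move=> x; exact: leqnn.
apply: (@sorted_leq_nth _ _ tr rf x0 s sorted_s i j) => //; rewrite inE size_s //; lia.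
Qed.

Lemma a_inj i j : i < m -> j < m -> a i = a j -> i = j.
Proof.
move=> im jm E; apply/eqP; rewrite -(nth_uniq x0 _ _ uniq_s) ?size_s //.
by apply/eqP.
Qed.

Lemma a_lt i j : i < j -> j < m -> a i < a j.
Proof.
move=> ij jm; rewrite ltn_neqAle a_le ?andbT; last 2 first; [lia|done|].
apply/negP => /eqP E; have := a_inj (ltn_trans ij jm) jm (val_inj E); lia.
Qed.

Lemma a_ltE i j : i < m -> j < m -> (a i < a j) = (i < j).
Proof.
move=> im jm; case: (ltnP i j) => ij; first exact: a_lt.
apply/negbTE; rewrite -leqNgt; exact: a_le.
Qed.

Lemma a_in i : i < m -> a i \in B.
Proof. by move=> im; rewrite -mem_s /a mem_nth ?size_s. Qed.

Lemma idx_a i : i < m -> idx B (a i) = i.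
Proof. by move=> im; rewrite /idx /a index_uniq ?size_s ?uniq_s. Qed.

Lemma a_idx u : u \in B -> a (idx B u) = u /\ idx B u < m.
Proof.
move=> uB; rewrite /a /idx nth_index ?mem_s //; split => //.
by rewrite -size_s index_mem mem_s.
Qed.

Lemma big_B R (idx0 : R) (op : Monoid.com_law idx0) (P : pred 'I_n) (G : 'I_n -> R) :
  \big[op/idx0]_(u in B | P u) G u = \big[op/idx0]_(i < m | P (a i)) G (a i).
Proof.
have hp : perm_eq (sort (fun x y : 'I_n => (x <= y)%N) (enum B)) (enum B).
  by rewrite perm_sort perm_refl.
rewrite -big_enum_cond -(perm_big _ hp).
rewrite (big_nth x0) big_mkord -/(sorted_elems B) size_s.
by [].
Qed.

Definition xs k i := dstar (a i) (a ((i + k) %% m)).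

Lemma xs_eq k i : 0 < k < m -> i < m ->
  xs k i + a i = a ((i+k) %% m) + n * (m <= i + k) /\ 0 < xs k i < n.
Proof.
move=> km im; rewrite /xs dstarE.
have := ltn_ord (a i); have := ltn_ord (a ((i + k) %% m)) => h1 h2.
case: (ltnP (i + k) m) => ikm.
  rewrite modn_small //.
  have := a_lt (i:=i) (j := i+k) ltac:(lia) ikm => lt.
  rewrite (ltnW lt) /= muln0; have := ltn_ord (a (i + k)); lia.
have -> : (i + k) %% m = i + k - m.
  have {1}-> : i + k = (i + k - m) + m by lia.
  rewrite modnDr modn_small //; lia.
have := a_lt (i:=i + k - m) (j := i) ltac:(lia) im => lt.
have -> : (a i <= a (i + k - #|B|)) = false by apply/negbTE; rewrite -ltnNge.
rewrite /= muln1; have := ltn_ord (a (i + k - #|B|)); move: lt; move: (nat_of_ord (a (i + k - #|B|))) => v; lia.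
Qed.

End OnSet.

Lemma rot_big R (idx0 : R) (op : Monoid.com_law idx0) m' k (F : nat -> R) : 0 < m' ->
  \big[op/idx0]_(i < m') F ((i + k) %% m') = \big[op/idx0]_(i < m') F i.
Proof.
move=> m0; pose h := fun i : 'I_m' => Ordinal (ltn_pmod (i + k) m0).
have hinj : injective h.
  move=> i1 i2 /(congr1 val) /= /eqP; rewrite eqn_modDr !modn_small // => /eqP E.
  exact: val_inj.
by rewrite [RHS](reindex_inj hinj).
Qed.

Lemma count_wrap m' k : k <= m' -> \sum_(i < m') (m' <= i + k : nat) = k.
Proof.
move=> km; rewrite -(big_mkord xpredT (fun i => (m' <= i + k : nat))).
rewrite (big_cat_nat (n := m' - k)) //=; last by lia.
rewrite big1_seq; last first.
  move=> i /andP [_]; rewrite mem_index_iota => hi; have -> : (m' <= i + k) = false by lia. by [].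
rewrite (eq_big_nat _ _ (F2 := fun _ => 1)); last first.
  move=> i hi; have -> : (m' <= i + k) = true by lia. by [].
rewrite sum_nat_const_nat; lia.
Qed.

Lemma xs_sum (B : {set 'I_n}) k : 0 < k < #|B| -> \sum_(i < #|B|) xs B k i = k * n.
Proof.
move=> km; have m0 : 0 < #|B| by lia.
have H : \sum_(i < #|B|) (xs B k i + a B i) =
         \sum_(i < #|B|) (a B ((i + k) %% #|B|) + n * (#|B| <= i + k)).
  apply: eq_bigr => i _; by case: (xs_eq km (ltn_ord i)).
move: H; rewrite !big_split /=.
have cw := @count_wrap #|B| k ltac:(lia).
rewrite (rot_big _ _ (fun j => nat_of_ord (a B j)) m0) -big_distrr /= cw.
set X := \sum_(i < #|B|) xs B k i; set Y := \sum_(i < #|B|) nat_of_ord (a B i); lia.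
Qed.

Lemma modS_eq m' i k : i < m' -> k < m' -> ((k + i) %% m' == i) = (k == 0).
Proof.
move=> im km; case: (ltnP (k + i) m') => h.
  rewrite modn_small //; apply/eqP/eqP; lia.
have -> : k + i = (k + i - m') + m' by lia.
rewrite modnDr modn_small; last by lia. apply/eqP/eqP; lia.
Qed.

Lemma big_B0 (B : {set 'I_n}) R (idx0 : R) (op : Monoid.com_law idx0) (G : 'I_n -> R) :
  \big[op/idx0]_(u in B) G u = \big[op/idx0]_(i < #|B|) G (a B i).
Proof.
rewrite -(big_B B op xpredT G); apply: eq_bigl => u; by rewrite andbT.
Qed.

Lemma Fprod_sq (B : {set 'I_n}) : 0 < #|B| ->
  Fprod B * Fprod B = \prod_(k < #|B| | 0 < k) \prod_(i < #|B|) hh n (xs B k i).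
Proof.
move=> m0.
set m := #|B|.
pose c := fun i j => cdist (a B i) (a B j).
have E1 : Fprod B = \prod_(i < m) \prod_(j < m | i < j) c i j.
  rewrite /Fprod big_B0; apply: eq_bigr => i _.
  rewrite big_B; apply: eq_bigl => j; rewrite a_ltE //.
have E2 : \prod_(i < m) \prod_(j < m | i < j) c i j = \prod_(i < m) \prod_(j < m | j < i) c i j.
  rewrite (eq_bigr (fun i : 'I_m => \prod_(j < m) (if i < j then c i j else 1))); last first.
    by move=> i _; rewrite big_mkcond.
  rewrite exchange_big /=; apply: eq_bigr => i _; rewrite [RHS]big_mkcond.
  apply: eq_bigr => j _; by rewrite /c cdistC.
rewrite E1 [X in _ * X]E2 -big_split /=.
rewrite (eq_bigr (fun i : 'I_m => \prod_(k < m | 0 < k) hh n (xs B k i))); last first.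
  move=> i _.
  have -> : \prod_(j < m | i < j) c i j * \prod_(j < m | j < i) c i j = \prod_(j < m | j != i) c i j.
    rewrite [RHS](bigID (fun j : 'I_m => i < j)) /=; congr (_ * _); apply: eq_bigl => j.
      by rewrite neq_ltn; case: (ltnP j i) => h; case: (ltnP i j) => h'; rewrite /= ?orbT ?orbF ?andbT ?andbF //; lia.
    by rewrite neq_ltn; case: (ltnP j i) => h; case: (ltnP i j) => h'; rewrite /= ?orbT ?orbF ?andbT ?andbF //; lia.
  pose h := fun k : 'I_m => Ordinal (ltn_pmod (k + i) m0).
  have hinj : injective h.
    move=> i1 i2 /(congr1 val) /= /eqP; rewrite eqn_modDr !modn_small // => /eqP E.
    exact: val_inj.
  rewrite (reindex_inj hinj); apply: eq_big => k.
    by rewrite -(inj_eq val_inj) /= modS_eq // lt0n.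
  by move=> _; rewrite /c cdistE /xs addnC.
by rewrite exchange_big.
Qed.

Lemma spanE (B : {set 'I_n}) u w : span B u w =
  if (idx B w + #|B| - idx B u) %% #|B| == 0 then #|B| else (idx B w + #|B| - idx B u) %% #|B|.
Proof. by []. Qed.

Lemma sigma_xs (B : {set 'I_n}) k v : 0 < k < #|B| ->
  sigma_vals B k v <-> exists i : 'I_#|B|, xs B k i = v.
Proof.
move=> km; split.
  move/existsP=> [u /andP [uB /existsP [w /andP [wB /and3P [uw sp dv]]]]].
  have [au im] := a_idx uB; have [aw jm] := a_idx wB.
  exists (Ordinal im); rewrite /xs /=.
  move: sp; rewrite spanE; case: ifP => [_ /eqP|_ sp]; first lia.
  rewrite modl in sp; [|exact im|exact jm|exact km].
  by rewrite -(eqP sp) aw au; apply/eqP.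
move=> [i xi].
have im := ltn_ord i.
have jm : (i + k) %% #|B| < #|B| by apply: ltn_pmod; lia.
apply/existsP; exists (a B i); rewrite a_in //=.
apply/existsP; exists (a B ((i + k) %% #|B|)); rewrite a_in //=.
apply/and3P; split.
- apply/eqP => E; have := a_inj im jm E => E'.
  have := @modS_eq #|B| i k im ltac:(lia); rewrite addnC -E' eqxx => /esym/eqP; lia.
- have r : ((i + k) %% #|B| + #|B| - i) %% #|B| = k.
    by apply/eqP; rewrite (@modl #|B| i ((i + k) %% #|B|) k im jm km).
  rewrite spanE !idx_a // r; case: ifP => [/eqP|]; [lia | by []].
- by rewrite -xi.
Qed.

Lemma ME_bal (B : {set 'I_n}) :
  maximally_even B <-> (forall k, 0 < k < #|B| -> bal #|B| (xs B k)).
Proof.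
split.
  move=> Hme k hk; have hk' : 1 <= k <= #|B| - 1 by lia.
  have val_of : forall i : 'I_#|B|, sigma_vals B k (xs B k i).
    by move=> i; apply/(@sigma_xs B k _ hk); exists i.
  case: (Hme k hk') => [[c Hc] | [c [_ [_ Hall]]]]; apply/forallP => i; apply/forallP => j.
    rewrite (Hc _ (val_of i)) (Hc _ (val_of j)); lia.
  move: (Hall _ (val_of i)) (Hall _ (val_of j)); lia.
move=> Hb k hk; have hk' : 0 < k < #|B| by lia.
have m0 : 0 < #|B| by lia.
have /forallP Hbk := Hb k hk'.
case: (@arg_minnP _ (Ordinal m0) xpredT (fun i : 'I_#|B| => xs B k i) isT) => j _ Hj.
set c := xs B k j.
have Hx : forall x, sigma_vals B k x -> x = c \/ x = c.+1.
  move=> x /(@sigma_xs B k _ hk') [i <-]; have := Hj i isT; have := forallP (Hbk i) j.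
  rewrite -/c; lia.
case: (boolP [exists i : 'I_#|B|, xs B k i == c.+1]).
  move/existsP => [i /eqP hi]; right; exists c; split.
    exists c; split => //; apply/(@sigma_xs B k _ hk'); by exists j.
  split => //; exists c.+1; split => //; apply/(@sigma_xs B k _ hk'); by exists i.
move/existsPn => Hn; left; exists c => x Hs.
case: (Hx x Hs) => // E.
move/(@sigma_xs B k _ hk'): Hs => [i hi]; have := Hn i; by rewrite hi E eqxx.
Qed.

Lemma seq_set (t : seq nat) : sorted ltn t -> all (fun y => y < n) t ->
  map val (sorted_elems [set x : 'I_n | nat_of_ord x \in t]) = t.
Proof.
move=> st alt; set B := [set x : 'I_n | nat_of_ord x \in t].
have ut : uniq t by apply: (sorted_uniq ltn_trans ltnn).
apply: (sorted_eq leq_trans anti_leq).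
- rewrite sorted_map; exact: (sorted_s B).
- apply: (sub_sorted _ st) => x y; exact: ltnW.
- apply: uniq_perm; first by rewrite (map_inj_uniq val_inj) (uniq_s B).
    exact: ut.
  move=> y; apply/mapP/idP.
    by move=> [x]; rewrite mem_s inE => ? ->.
  move=> yt; have yn : y < n by move/allP: alt => /(_ y yt).
  exists (Ordinal yn) => //; by rewrite mem_s inE.
Qed.

Lemma floor_step m i j : 0 < m <= n -> i < j -> i * n %/ m < j * n %/ m.
Proof.
move=> /andP [m0 mn] ij.
have : i * n %/ m + 1 <= j * n %/ m.
  have -> : i * n %/ m + 1 = (1 * m + i * n) %/ m by rewrite divnMDl // addnC.
  apply: leq_div2r; nia.
lia.
Qed.

Lemma exists_ME m : 0 < m <= n -> exists B : {set 'I_n},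
  #|B| = m /\ forall k, 0 < k < m -> bal m (xs B k).
Proof.
move=> hm; have m0 : 0 < m by case/andP: hm.
pose f := fun i => i * n %/ m.
pose t := map f (iota 0 m).
have st : sorted ltn t.
  have hf : {homo f : x y / x < y} by move=> i j ij; exact: floor_step.
  have := @homo_sorted _ _ f ltn ltn hf _ (iota_ltn_sorted 0 m). by [].
have alt : all (fun y => y < n) t.
  apply/allP => y /mapP [i]; rewrite mem_iota add0n => /andP [_ im] ->.
  rewrite /f ltn_divLR //; nia.
set B := [set x : 'I_n | nat_of_ord x \in t].
have Hs := seq_set st alt.
have Hm : #|B| = m by rewrite -(size_s B) -(size_map val) -/B Hs size_map size_iota.
have Ha : forall i, i < m -> nat_of_ord (a B i) = f i.
  move=> i im; rewrite /a -(nth_map x0 0 val); last by rewrite size_s Hm.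
  by rewrite -/B Hs (nth_map 0) ?size_iota // nth_iota.
exists B; split => // k km.
have Hx : forall i, i < m -> xs B k i = k * n %/ m + (m <= (i * n) %% m + (k * n) %% m).
  move=> i im; have km' : 0 < k < #|B| by rewrite Hm.
  have im' : i < #|B| by rewrite Hm.
  case: (xs_eq km' im'); rewrite Hm => E _.
  have jm : (i + k) %% m < m by apply: ltn_pmod.
  move: E; rewrite Ha // Ha //.
  have -> : f ((i + k) %% m) + n * (m <= i + k) = f (i + k).
    rewrite /f; case: (ltnP (i + k) m) => h.
      by rewrite modn_small //= muln0 addn0.
    have e : i + k = (i + k - m) + m by lia.
    rewrite {1}e modnDr modn_small; last by lia.
    by rewrite /= muln1 {2}e mulnDl [m * n]mulnC [_ + n * m]addnC divnMDl // addnC.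
  rewrite /f mulnDl divnD //; lia.
apply/forallP => i; apply/forallP => j.
rewrite !Hx //; case: (m <= _) ; case: (m <= _); rewrite /=; lia.
Qed.

Definition Pk (B : {set 'I_n}) k := \prod_(i < #|B|) hh n (xs B k i).

Lemma Pk_pos (B : {set 'I_n}) k : 0 < k < #|B| -> 0 < Pk B k.
Proof.
move=> km; apply: prodn_gt0 => i; case: (xs_eq km (ltn_ord i)) => _ h.
rewrite /hh; lia.
Qed.

Lemma Pk_cmp (A B : {set 'I_n}) k : #|B| = #|A| -> 0 < k < #|A| -> bal #|A| (xs A k) ->
  Pk B k <= Pk A k /\ (~~ bal #|A| (xs B k) -> Pk B k < Pk A k).
Proof.
move=> HAB km Hb.
have kmB : 0 < k < #|B| by rewrite HAB.
have HS : \sum_(i < #|A|) xs A k i = \sum_(i < #|A|) xs B k i.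
  rewrite xs_sum // -HAB xs_sum //.
have Hy : forall i, i < #|A| -> 0 < xs B k i < n.
  move=> i; rewrite -HAB => im; by case: (xs_eq kmB im).
have := cmp (n:=n) (ltn_trans (proj1 (andP km)) (proj2 (andP km))) Hy Hb HS.
by rewrite /Pk HAB.
Qed.

Lemma Fsq (B : {set 'I_n}) : 0 < #|B| ->
  Fprod B * Fprod B = \prod_(k < #|B| | 0 < k) Pk B k.
Proof. exact: Fprod_sq. Qed.

Lemma Fprod_small (B : {set 'I_n}) : #|B| <= 1 -> Fprod B = 1.
Proof.
move=> hB; rewrite /Fprod; apply: big1 => u uB; apply: big1 => v /andP [vB uv].
have [au im] := a_idx uB; have [av jm] := a_idx vB.
have E : idx B u = idx B v by lia.
by move: uv; rewrite -au -av E ltnn.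
Qed.
End Comb.

Unset Implicit Arguments.

Theorem mainTheorem6 (n : nat) (A : {set 'I_n}) :
  (3 <= n)%N ->
  (maximally_even A <->
   Fprod A = \max_(B : {set 'I_n} | #|B| == #|A|) Fprod B).
Proof.
move=> n3; have n0 : 0 < n by lia.
pose x0 := Ordinal n0.
have Hge : Fprod A <= \max_(B : {set 'I_n} | #|B| == #|A|) Fprod B.
  exact: (leq_bigmax_cond (P := fun B : {set 'I_n} => #|B| == #|A|) A (eqxx _)).
case: (leqP #|A| 1) => hA.
  have Hle : \max_(B : {set 'I_n} | #|B| == #|A|) Fprod B <= Fprod A.
    apply/bigmax_leqP => B /eqP hB; rewrite !(Fprod_small x0) //; by rewrite hB.
  split => _; last first.
    move=> k hk; lia.
  by apply/eqP; rewrite eqn_leq Hle Hge.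
have m0 : 0 < #|A| by lia.
split.
  move/(ME_bal x0 A) => HbA.
  have Hle : \max_(B : {set 'I_n} | #|B| == #|A|) Fprod B <= Fprod A.
    apply/bigmax_leqP => B /eqP hB.
    have : Fprod B * Fprod B <= Fprod A * Fprod A.
      rewrite !(Fsq x0) ?hB //.
      apply: leq_prod => k kpos.
      have km : 0 < k < #|A| by rewrite kpos ltn_ord.
      by case: (Pk_cmp (x0:=x0) hB km (HbA k km)).
    nia.
  by apply/eqP; rewrite eqn_leq Hle Hge.
move=> HF; apply/(ME_bal x0 A) => k km.
case: (boolP (bal #|A| (xs x0 A k))) => // nb; exfalso.
have hmn : 0 < #|A| <= n by rewrite m0 /=; have := max_card (mem A); rewrite card_ord.
have [B0 [HB0 Hb0]] := exists_ME x0 hmn.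
have HB0A : #|B0| = #|A| by [].
have Hlt : Fprod A * Fprod A < Fprod B0 * Fprod B0.
  rewrite !(Fsq x0) ?HB0A //.
  have ko : (Ordinal (proj2 (andP km)) : 'I_#|A|) \in [pred k : 'I_#|A| | 0 < k] by rewrite inE /=; case/andP: (km).
  rewrite !(bigD1 _ ko) /=.
  have kmB : 0 < k < #|B0| by rewrite HB0.
  have HbB : bal #|B0| (xs x0 B0 k) by rewrite HB0; exact: Hb0.
  have [_ lt1] := Pk_cmp (A:=B0) (B:=A) (esym HB0) kmB HbB.
  have lt2 : Pk x0 A k < Pk x0 B0 k by apply: lt1; rewrite HB0.
  have Hrest : \prod_(i < #|A| | (0 < i) && (i != Ordinal (proj2 (andP km)))) Pk x0 A i <=
               \prod_(i < #|A| | (0 < i) && (i != Ordinal (proj2 (andP km)))) Pk x0 B0 i.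
    apply: leq_prod => i /andP [ipos _].
    have imB : 0 < i < #|B0| by rewrite ipos HB0 ltn_ord.
    have HbBi : bal #|B0| (xs x0 B0 i) by rewrite HB0; apply: Hb0; rewrite ipos ltn_ord.
    by case: (Pk_cmp (A:=B0) (B:=A) (esym HB0) imB HbBi).
  have Hpos : 0 < \prod_(i < #|A| | (0 < i) && (i != Ordinal (proj2 (andP km)))) Pk x0 B0 i.
    rewrite big_mkcond; apply: prodn_gt0 => i; case: ifP => // /andP [ipos _].
    apply: Pk_pos; by rewrite ipos HB0 ltn_ord.
  move: lt2 Hrest Hpos => /=.
  set a1 := Pk x0 A k; set b1 := Pk x0 B0 k.
  set c1 := \prod_(i < #|A| | _) Pk x0 A i; set d1 := \prod_(i < #|A| | _) Pk x0 B0 i.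
  nia.
have : Fprod B0 <= Fprod A.
  rewrite HF; exact: (leq_bigmax_cond (P := fun B : {set 'I_n} => #|B| == #|A|) B0 (introT eqP HB0)).
nia.
Qed.
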